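(* Let $G=(V,E)$ be a simple graph with $n$ vertices, $m$ edges, maximum degree $\Delta$ and arboricity $\alpha$, and let $\frac{1}{\alpha}\leq\varepsilon<1$. Procedure Arboricity Edge-Coloring with parameter $h=\max\{\lfloor\log(\varepsilon\alpha/3)\rfloor,0\}$ computes a proper edge-coloring of $G$ using at most $\Delta+\varepsilon\alpha$ colors in $O\left(\frac{m\log n}{\varepsilon^{7}}\right)$ deterministic time. Its randomized version requires $O\left(\frac{m\log n}{\varepsilon}\right)$ expected time.
   Context: Logarithms are base 2. The arboricity of $G$ is $\alpha(G)=\max_{S\subseteq V,|S|\ge2}\lceil |E(G[S])|/(|S|-1)\rceil$. A proper $k$-edge-coloring is a map $\varphi:E\to\{1,\dots,k\}$ assigning distinct colors to distinct edges sharing an endpoint. An orientation $\mu$ assigns a direction to each edge; $\mathrm{indeg}(v)$, $\mathrm{outdeg}(v)$ are the in/out-degrees. An oriented degree-splitting of $(G,\mu)$ with discrepancy $\kappa$ is a partition $(E_1,E_2)$ of $E$ such that for every vertex $v$, the numbers of incoming edges of $v$ in $E_1$ and in $E_2$ differ by at most $\kappa$, and the numbers of outgoing edges of $v$ in $E_1$ and in $E_2$ differ by at most $\kappa$. Procedure Forests-Decomposition Orientation$(G)$: starting from $\mathcal A=V$, repeatedly pick $v\in\mathcal A$ of minimum degree in $G[\mathcal A]$, orient every edge from $v$ to its neighbours in $\mathcal A$, and remove $v$ from $\mathcal A$, until $\mathcal A=\emptyset$. Procedure Oriented Edge-Coloring$(G,\mu,h)$: if $h=0$, return a proper $(\Delta(G)+1)$-edge-coloring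 of (the undirected) $G$ computed by a base-case subroutine. Otherwise compute an oriented degree-splitting $(E_1,E_2)$ of $(G,\mu)$ with discrepancy at most 1 (computable in $O(|E|)$ time), let $G_1=(V,E_1)$, $G_2=(V,E_2)$ with the orientation induced by $\mu$, recursively compute $\varphi_1=$ Oriented Edge-Coloring$(G_1,\mu,h-1)$, $\varphi_2=$ Oriented Edge-Coloring$(G_2,\mu,h-1)$, and return $\varphi(e)=\varphi_1(e)$ on $E_1$ and $\varphi(e)=p_1+\varphi_2(e)$ on $E_2$, where $p_1$ is the palette size of $\varphi_1$. Procedure Arboricity Edge-Coloring$(G,h)$: compute $\mu=$ Forests-Decomposition Orientation$(G)$ and return Oriented Edge-Coloring$(G,\mu,h)$. Deterministic version: the base-case subroutine is a deterministic algorithm computing a proper $(\Delta'+1)$-edge-coloring of an $n'$-vertex $m'$-edge graph with maximum degree $\Delta'$ and arboricity $\alpha'$ in $O(m'\alpha'^7\log n')$ time. Randomized version: the base-case subroutine is a randomized algorithm computing a proper $(\Delta'+1)$-edge-coloring in expected $O(m'\alpha'\log n')$ time. *)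

(* Defs.v *)
From mathcomp Require Import all_boot.
From Stdlib Require Import Reals.
Import ssrnat.

Set Implicit Arguments.
Unset Strict Implicit.
Unset Printing Implicit Defensive.

(* A simple graph on the finite vertex type V is given by its edge set:
   a set of 2-element subsets of V. *)
Section Graphs.
Variable V : finType.
Implicit Types (E : {set {set V}}) (e : {set V}) (v : V).

Definition simple_graph E : Prop := forall e, e \in E -> #|e| = 2.

Definition deg E v : nat := #|[set e in E | v \in e]|.

Definition max_deg E : nat := \max_(v : V) deg E v.

Definition induced_edges E (S : {set V}) : {set {set V}} :=
  [set e in E | e \subset S].

Definition ceil_div (a b : nat) : nat := (a + b.-1) %/ b.

Definition arboricity E : nat :=
  \max_(S : {set V} | 2 <= #|S|) ceil_div #|induced_edges E S| (#|S| - 1).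

Definition proper_edge_coloring E (phi : {set V} -> nat) (k : nat) : Prop :=
  (forall e, e \in E -> 1 <= phi e <= k) /\
  (forall e f, e \in E -> f \in E -> e != f -> e :&: f != set0 -> phi e != phi f).

(* An orientation mu assigns to every edge its tail (source) vertex mu e,
   the edge being directed from mu e to the other endpoint. *)
Definition orientation E (mu : {set V} -> V) : Prop :=
  forall e, e \in E -> mu e \in e.

Definition indeg E (mu : {set V} -> V) v : nat :=
  #|[set e in E | (v \in e) && (mu e != v)]|.
Definition outdeg E (mu : {set V} -> V) v : nat :=
  #|[set e in E | (v \in e) && (mu e == v)]|.

Definition oriented_splitting E (mu : {set V} -> V) (E1 E2 : {set {set V}}) : Prop :=
  E1 :|: E2 = E /\ E1 :&: E2 = set0 /\
  (forall v, indeg E1 mu v <= indeg E2 mu v + 1 /\ indeg E2 mu v <= indeg E1 mu v + 1) /\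
  (forall v, outdeg E1 mu v <= outdeg E2 mu v + 1 /\ outdeg E2 mu v <= outdeg E1 mu v + 1).

Definition deg_in E (A : seq V) v : nat :=
  #|[set e in E | (v \in e) && all (fun x => x \in A) (enum e)]|.

(* Procedure Forests-Decomposition Orientation: s is the order in which vertices
   are removed from the active set (A_i = drop i s); each removed vertex has
   minimum degree in G[A_i]; every edge is oriented from the endpoint removed
   first towards the other one.  Ties are resolved arbitrarily. *)
Definition fdo_order E (s : seq V) : Prop :=
  perm_eq s (enum V) /\
  forall i, i < size s -> forall u, u \in drop i s ->
    deg_in E (drop i s) (nth u s i) <= deg_in E (drop i s) u.

Definition fdo_orientation E (mu : {set V} -> V) : Prop :=
  exists s, fdo_order E s /\ orientation E mu /\
    forall e, e \in E -> forall x, x \in e -> index (mu e) s <= index x s.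

(* Procedure Oriented Edge-Coloring(G, mu, h), as a relation between inputs
   (E, h) and possible outcomes (phi, palette size p, running time c).
   [bc E] is the running time of the base-case subroutine on (V,E);
   [sc E] is the running time of the non-recursive work of one recursive call
   (computing the splitting and combining the colorings). *)
Inductive oec (sc bc : {set {set V}} -> R) (mu : {set V} -> V) :
  {set {set V}} -> nat -> ({set V} -> nat) -> nat -> R -> Prop :=
| oec_base E phi :
    proper_edge_coloring E phi (max_deg E).+1 ->
    oec sc bc mu E 0 phi (max_deg E).+1 (bc E)
| oec_step E h E1 E2 phi1 p1 c1 phi2 p2 c2 :
    oriented_splitting E mu E1 E2 ->
    oec sc bc mu E1 h phi1 p1 c1 ->
    oec sc bc mu E2 h phi2 p2 c2 ->
    oec sc bc mu E h.+1 (fun e => if e \in E1 then phi1 e else p1 + phi2 e)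
        (p1 + p2) (sc E + c1 + c2)%R.

End Graphs.

(* Procedure Arboricity Edge-Coloring(G, h): a possible run with output coloring
   phi, palette size p and total running time t; [oc E] is the running time of
   Forests-Decomposition Orientation. *)
Definition aec_run (oc sc bc : forall V : finType, {set {set V}} -> R)
  (V : finType) (E : {set {set V}}) (h : nat) (phi : {set V} -> nat) (p : nat) (t : R) : Prop :=
  exists mu, fdo_orientation E mu /\
    exists c, oec (sc V) (bc V) mu E h phi p c /\ t = (oc V E + c)%R.

Definition log2 (x : R) : R := (ln x / ln 2)%R.

Definition h_param (eps : R) (alpha : nat) : nat :=
  Z.to_nat (Z.max (Int_part (log2 (eps * INR alpha / 3))) 0).

(* Main.v *)
Require Import Defs.
From mathcomp Require Import all_boot.
From mathcomp Require Import zify.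
From Stdlib Require Import Reals Lra Lia.
Set Implicit Arguments.
Unset Strict Implicit.

Lemma card_sum (X : finType) (F : {set X}) (P : pred X) :
  #|[set e in F | P e]| = \sum_(e in F) P e.
Proof.
rewrite -sum1_card [RHS]big_mkcond [LHS]big_mkcond /=.
by apply: eq_bigr => e _; rewrite !inE; case: (e \in F); case: (P e).
Qed.

Lemma card_split (X : finType) (E E1 E2 : {set X}) (P : pred X) :
  E1 :|: E2 = E -> E1 :&: E2 = set0 ->
  #|[set e in E | P e]| = #|[set e in E1 | P e]| + #|[set e in E2 | P e]|.
Proof.
move=> hU hI; rewrite !card_sum -hU.
rewrite [LHS](bigID (fun e => e \in E1)) /=.
congr (_ + _); apply: eq_bigl => e; rewrite !inE.
  by case: (e \in E1) (e \in E2) => [] [].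
move/setP: hI => /(_ e); rewrite !inE.
by case: (e \in E1) (e \in E2) => [] [] /=.
Qed.

Lemma ceil_le2 x s d : x <= s * d -> 2 <= s -> ceil_div x (s - 1) <= d.*2.
Proof.
move=> hx hs; rewrite /ceil_div -ltnS ltn_divLR; [nia|lia].
Qed.

Lemma ceil_le_s x s : x <= s * (s - 1) -> 2 <= s -> ceil_div x (s - 1) <= s.
Proof.
move=> hx hs; rewrite /ceil_div -ltnS ltn_divLR; [nia|lia].
Qed.

Lemma ceil_ge x s : 2 <= s -> x <= ceil_div x (s - 1) * (s - 1).
Proof.
move=> hs; rewrite /ceil_div.
have := divn_eq (x + (s - 1).-1) (s - 1).
have := ltn_pmod (x + (s - 1).-1) (_ : 0 < s - 1).
move=> H; have {}H := H ltac:(lia). lia.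
Qed.

Section G.
Variable V : finType.
Implicit Types (E : {set {set V}}) (mu : {set V} -> V).

Lemma deg_split E mu v : deg E v = indeg E mu v + outdeg E mu v.
Proof.
rewrite /deg /indeg /outdeg !card_sum -big_split /=.
by apply: eq_bigr => e _; case: (v \in e); case: (mu e == v).
Qed.

Lemma card_split_E E E1 E2 : E1 :|: E2 = E -> E1 :&: E2 = set0 ->
  #|E| = #|E1| + #|E2|.
Proof.
move=> hU hI.
have h : forall F : {set {set V}}, [set e in F | predT e] = F.
  by move=> F; apply/setP => e; rewrite inE andbT.
by rewrite -[E]h -[E1]h -[E2]h (card_split _ hU hI).
Qed.

Lemma all_enum_sub (A : seq V) (e : {set V}) :
  all (fun x => x \in A) (enum e) = (e \subset [set x | x \in A]).
Proof.
apply/allP/subsetP => h x.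
  by move=> hx; rewrite inE; apply: h; rewrite mem_enum.
by rewrite mem_enum => hx; have := h x hx; rewrite inE.
Qed.

Lemma arb_le_out E mu d : orientation E mu -> (forall v, outdeg E mu v <= d) ->
  arboricity E <= d.*2.
Proof.
move=> hor hd; apply/bigmax_leqP => S hS; apply: ceil_le2 => //.
set F := induced_edges E S.
have -> : #|F| = \sum_(e in F) \sum_(v in S) (mu e == v).
  rewrite -sum1_card; apply: eq_bigr => e.
  rewrite inE => /andP [heE heS].
  rewrite -card_sum.
  have -> : [set v in S | mu e == v] = [set mu e].
    apply/setP => v; rewrite !inE eq_sym; case: eqP => [->|]; rewrite ?andbT ?andbF //.
    by apply: (subsetP heS); apply: hor.
  by rewrite cards1.
rewrite exchange_big /= -sum_nat_const; apply: leq_sum => v hv.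
apply: leq_trans (hd v); rewrite -card_sum; apply: subset_leq_card.
apply/subsetP => e; rewrite !inE => /andP [/andP [heE heS] /eqP <-].
by rewrite heE eqxx andbT hor.
Qed.

Lemma arb_le_n E : simple_graph E -> arboricity E <= #|V|.
Proof.
move=> hs; apply/bigmax_leqP => S hS.
apply: leq_trans (max_card S).
apply: ceil_le_s => //.
apply: (@leq_trans 'C(#|S|, 2)).
  rewrite -cards_draws; apply: subset_leq_card; apply/subsetP => e.
  by rewrite !inE => /andP [heE ->]; rewrite hs.
rewrite bin2; have : (#|S| * #|S|.-1)./2 <= #|S| * #|S|.-1 by rewrite -divn2 leq_div.
lia.
Qed.


Lemma mem_drop_index (s : seq V) i x : x \in s -> i <= index x s -> x \in drop i s.
Proof.
move=> hx hi; move: hx; rewrite -{1}(cat_take_drop i s) mem_cat => /orP [] // ht.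
have := hi; rewrite -{1}(cat_take_drop i s) index_cat ht.
move=> hix; have h2 : index x (take i s) < size (take i s) by rewrite index_mem.
have h3 : size (take i s) <= i by rewrite size_take; case: ltnP => // /ltnW.
lia.
Qed.

Lemma fdo_out E mu : simple_graph E -> fdo_orientation E mu ->
  forall v, outdeg E mu v <= (arboricity E).*2.
Proof.
move=> hsim [s [[hperm hmin] [hor hidx]]] v.
have vs : v \in s by rewrite (perm_mem hperm) mem_enum.
set i := index v s.
have hi : i < size s by rewrite index_mem.
have hnth : nth v s i = v by rewrite nth_index.
set A := drop i s.
set SA := [set x | x \in A].
set F := induced_edges E SA.
have hdeg : forall u, deg_in E A u = #|[set e in F | u \in e]|.
  move=> u; congr (#|pred_of_set _|); apply/setP => e; rewrite !inE all_enum_sub.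
  by rewrite andbA andbAC.
have vA : v \in A by apply: mem_drop_index.
have h1 : outdeg E mu v <= deg_in E A v.
  apply: subset_leq_card; apply/subsetP => e; rewrite !inE => /andP [heE /andP [hve /eqP hmu]].
  rewrite heE hve /= all_enum_sub; apply/subsetP => x hx; rewrite inE.
  apply: mem_drop_index; first by rewrite (perm_mem hperm) mem_enum.
  by rewrite /i -hmu; apply: hidx.
apply: leq_trans h1 _.
set d := deg_in E A v.
have hsum : #|SA| * d <= (#|F|).*2.
  apply: (@leq_trans (\sum_(u in SA) deg_in E A u)).
    rewrite -sum_nat_const; apply: leq_sum => u; rewrite inE => hu.
    by rewrite /d -{1}hnth (set_nth_default u) //; apply: hmin.
  under eq_bigr => u _ do rewrite hdeg card_sum.
  rewrite exchange_big /= -muln2 -sum_nat_const; apply: leq_sum => e heF.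
  rewrite -card_sum.
  move: heF; rewrite inE => /andP [heE _]; rewrite -(hsim e heE).
  apply: subset_leq_card; apply/subsetP => x; rewrite inE; by case/andP.
have hSA : 0 < #|SA| by apply/card_gt0P; exists v; rewrite inE.
case: (ltnP 1 #|SA|) => hs.
  have hF : #|F| <= arboricity E * (#|SA| - 1).
    apply: leq_trans (ceil_ge _ hs) _; rewrite leq_mul2r; apply/orP; right.
    by apply: (@leq_bigmax_cond _ (fun S : {set V} => 2 <= #|S|) (fun S => ceil_div #|induced_edges E S| (#|S| - 1)) SA).
  nia.
have F0 : F = set0.
  apply/setP => e; rewrite !inE; apply/negbTE/negP => /andP [heE hsub].
  have := subset_leq_card hsub; rewrite (hsim e heE); lia.
rewrite F0 cards0 in hsum; nia.
Qed.


Lemma inU E E1 E2 e : E1 :|: E2 = E -> e \in E -> e \notin E1 -> e \in E2.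
Proof. by move=> <-; rewrite inE => /orP [->|]. Qed.

Lemma subU E E1 E2 : E1 :|: E2 = E -> E1 \subset E /\ E2 \subset E.
Proof. by move=> <-; rewrite subsetUl subsetUr. Qed.

Lemma oec_proper sc bc mu E h phi p c :
  oec sc bc mu E h phi p c -> proper_edge_coloring E phi p.
Proof.
elim => {E h phi p c} [E phi //|E h E1 E2 phi1 p1 c1 phi2 p2 c2 [hU [hI _]] _ [r1 p1ok] _ [r2 p2ok]].
have [s1 s2] := subU hU.
split.
  move=> e he; case: ifP => he1.
    by have := r1 e he1; lia.
  by have := r2 e (inU hU he (negbT he1)); lia.
move=> e f he hf hne hcap.
case: ifP => he1; case: ifP => hf1.
- exact: p1ok.
- have := r1 e he1; have := r2 f (inU hU hf (negbT hf1)).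
  move=> a b; apply/eqP; lia.
- have := r1 f hf1; have := r2 e (inU hU he (negbT he1)).
  move=> a b; apply/eqP; lia.
- have := p2ok e f (inU hU he (negbT he1)) (inU hU hf (negbT hf1)) hne hcap.
  by rewrite eqn_add2l.
Qed.


Lemma leR (n m : nat) : n <= m -> (INR n <= INR m)%R.
Proof. by move/leP; apply: le_INR. Qed.

Lemma INRD (n m : nat) : INR (n + m) = (INR n + INR m)%R.
Proof. by rewrite -plusE plus_INR. Qed.

Lemma INRM (n m : nat) : INR (n * m) = (INR n * INR m)%R.
Proof. by rewrite -multE mult_INR. Qed.

Lemma half_bound (x x1 x2 : nat) (a : R) : x = x1 + x2 -> x1 <= x2 + 1 ->
  (INR x <= a)%R -> (INR x1 <= (a + 1) / 2)%R.
Proof.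
move=> hx hd ha; have : x1.*2 <= x + 1 by lia.
move/leR; rewrite INRD -addnn INRD /=; lra.
Qed.

Lemma maxdeg_le E (D : R) : (0 <= D)%R -> (forall v, INR (deg E v) <= D)%R ->
  (INR (max_deg E) <= D)%R.
Proof.
move=> h0 hv; rewrite /max_deg.
apply: (big_ind (fun x => INR x <= D)%R) => //.
by move=> x y hx hy; rewrite /maxn; case: ifP.
Qed.

Lemma oec_pal sc bc mu E h phi p c :
  oec sc bc mu E h phi p c -> forall (a b : V -> R) (D : R), (0 <= D)%R ->
  (forall v, INR (indeg E mu v) <= a v)%R -> (forall v, INR (outdeg E mu v) <= b v)%R ->
  (forall v, a v + b v <= D)%R -> (INR p <= D + 3 * 2 ^ h - 2)%R.
Proof.
elim => {E h phi p c} [E phi _|E h E1 E2 phi1 p1 c1 phi2 p2 c2 [hU [hI [hin hout]]] _ IH1 _ IH2] a b D hD ha hb hab.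
  rewrite S_INR /=.
  have : (INR (max_deg E) <= D)%R.
    apply: maxdeg_le => // v; rewrite (deg_split _ mu) INRD.
    by have := ha v; have := hb v; have := hab v; lra.
  lra.
have hi := fun v : V => card_split (fun e : {set V} => (v \in e) && (mu e != v)) hU hI.
have ho := fun v : V => card_split (fun e : {set V} => (v \in e) && (mu e == v)) hU hI.
have H1 := IH1 (fun v => (a v + 1) / 2)%R (fun v => (b v + 1) / 2)%R ((D + 2) / 2)%R.
have H2 := IH2 (fun v => (a v + 1) / 2)%R (fun v => (b v + 1) / 2)%R ((D + 2) / 2)%R.
have : (INR p1 <= (D + 2) / 2 + 3 * 2 ^ h - 2)%R.
  apply: H1.
  - lra.
  - move=> v; apply: (half_bound (hi v)) => //; [exact: (proj1 (hin v)) | exact: ha].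
  - move=> v; apply: (half_bound (ho v)) => //; [exact: (proj1 (hout v)) | exact: hb].
  - by move=> v; have := hab v; lra.
have : (INR p2 <= (D + 2) / 2 + 3 * 2 ^ h - 2)%R.
  apply: H2.
  - lra.
  - move=> v; apply: (half_bound (x := indeg E mu v) (x1 := indeg E2 mu v) (x2 := indeg E1 mu v)).
    + by rewrite /indeg (hi v) addnC.
    + exact: (proj2 (hin v)).
    + exact: ha.
  - move=> v; apply: (half_bound (x := outdeg E mu v) (x1 := outdeg E2 mu v) (x2 := outdeg E1 mu v)).
    + by rewrite /outdeg (ho v) addnC.
    + exact: (proj2 (hout v)).
    + exact: hb.
  - by move=> v; have := hab v; lra.
rewrite INRD /=; lra.
Qed.


Lemma oec_cost sc bc mu (E0 : {set {set V}}) (S Q beta : R) : (0 <= S)%R ->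
  (forall E', E' \subset E0 -> sc E' <= S * INR #|E'|)%R ->
  (forall E', E' \subset E0 -> (forall v, INR (outdeg E' mu v) <= beta)%R ->
      bc E' <= Q * INR #|E'|)%R ->
  forall E h phi p c, oec sc bc mu E h phi p c -> E \subset E0 ->
  forall B, (forall v, INR (outdeg E mu v) <= B)%R -> (B <= 2 ^ h * (beta - 1) + 1)%R ->
  (c <= S * INR #|E| * INR h + Q * INR #|E|)%R.
Proof.
move=> hS hsc hbc.
move=> E h phi p c H; elim: H => {E h phi p c} [E phi _|E h E1 E2 phi1 p1 c1 phi2 p2 c2 [hU [hI [hin hout]]] _ IH1 _ IH2] hsub B hB hBb.
  have hbe : (B <= beta)%R by move: hBb; rewrite /=; lra.
  have := hbc E hsub (fun v => Rle_trans _ _ _ (hB v) hbe).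
  simpl; lra.
have ho := fun v : V => card_split (fun e : {set V} => (v \in e) && (mu e == v)) hU hI.
have [s1 s2] := subU hU.
have hs1 := subset_trans s1 hsub; have hs2 := subset_trans s2 hsub.
have hB' : ((B + 1) / 2 <= 2 ^ h * (beta - 1) + 1)%R by simpl in hBb; lra.
have H1 := IH1 hs1 ((B + 1) / 2)%R.
have H2 := IH2 hs2 ((B + 1) / 2)%R.
have : (c1 <= S * INR #|E1| * INR h + Q * INR #|E1|)%R.
  apply: H1 => // v; apply: (half_bound (ho v)) => //; [exact: (proj1 (hout v)) | exact: hB].
have : (c2 <= S * INR #|E2| * INR h + Q * INR #|E2|)%R.
  apply: H2 => // v; apply: (half_bound (x := outdeg E mu v) (x1 := outdeg E2 mu v) (x2 := outdeg E1 mu v)).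
  + by rewrite /outdeg (ho v) addnC.
  + exact: (proj2 (hout v)).
  + exact: hB.
have := hsc E hsub.
rewrite (card_split_E hU hI) INRD S_INR.
move=> a b c'; nra.
Qed.


Local Open Scope R_scope.
Lemma ln_le_inv a b : 0 < a -> 0 < b -> ln a <= ln b -> a <= b.
Proof.
intros ha hb hl; destruct (Rle_lt_dec a b) as [h|h]; auto.
pose proof (ln_increasing b a hb h); lra.
Qed.

Lemma ln_mono a b : 0 < a -> a <= b -> ln a <= ln b.
Proof.
intros ha hab; destruct (Req_dec a b) as [->|h]; [lra|].
left; apply ln_increasing; lra.
Qed.

Lemma ln2_pos : 0 < ln 2.
Proof. pose proof ln_lt_2; lra. Qed.

Lemma log2_ge0 a : 1 <= a -> 0 <= log2 a.
Proof.
intros ha; unfold log2; pose proof ln2_pos.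
pose proof (@ln_mono 1 a ltac:(lra) ha); rewrite ln_1 in H0.
apply Rmult_le_pos; [lra| left; apply Rinv_0_lt_compat; lra].
Qed.

Lemma log2_mono a b : 0 < a -> a <= b -> log2 a <= log2 b.
Proof.
intros ha hab; unfold log2; pose proof ln2_pos.
pose proof (@ln_mono a b ha hab).
apply Rmult_le_compat_r; [left; apply Rinv_0_lt_compat; lra| lra].
Qed.

Lemma hp_facts eps a : 0 < eps -> eps < 1 -> 1 <= eps * INR a ->
  3 * 2 ^ (h_param eps a) - 2 <= eps * INR a /\
  eps * INR a < 6 * 2 ^ (h_param eps a) /\
  INR (h_param eps a) <= log2 (INR a).
Proof.
intros he1 he2 hea.
assert (ha : 1 <= INR a).
{ assert (INR a >= 0) by (apply Rle_ge, pos_INR).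
  destruct (Rle_lt_dec 1 (INR a)); auto. nra. }
set (x := eps * INR a / 3).
assert (hx : 0 < x) by (unfold x; lra).
assert (hxa : x <= INR a) by (unfold x; nra).
assert (hxd : x = eps * INR a / 3) by reflexivity.
pose proof ln2_pos as hl2.
unfold h_param; fold x.
set (L := log2 x).
assert (hL : ln x = L * ln 2) by (unfold L, log2; field; lra).
assert (hLd : L = log2 x) by reflexivity.
clearbody x L.
destruct (base_Int_part L) as [b1 b2].
destruct (Z.lt_ge_cases (Int_part L) 0) as [hneg|hpos].
- rewrite Z.max_r; [|lia]. change (Z.to_nat 0) with 0%nat; rewrite pow_O INR_0.
  split; [lra|]. split.
  + assert (L < 0).
    { assert (IZR (Int_part L) <= -1).
      { apply IZR_le. lia. }
      lra. }
    assert (ln x < 0).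
    { nra. }
    assert (x < 1). { rewrite <- ln_1 in H0. apply ln_lt_inv; lra. }
    lra.
  + apply log2_ge0; auto.
- rewrite Z.max_l; [|lia].
  set (h := Z.to_nat (Int_part L)).
  assert (hh : INR h = IZR (Int_part L)).
  { unfold h. rewrite INR_IZR_INZ Znat.Z2Nat.id; auto. }
  assert (hp : 0 < 2 ^ h) by (apply pow_lt; lra).
  assert (h1 : 2 ^ h <= x).
  { apply ln_le_inv; auto. rewrite ln_pow; [|lra]. rewrite hL hh.
    apply Rmult_le_compat_r; lra. }
  assert (h2 : x < 2 ^ (S h)).
  { apply ln_lt_inv; auto. apply pow_lt; lra. rewrite ln_pow; [|lra]. rewrite hL S_INR hh.
    apply Rmult_lt_compat_r; lra. }
  simpl in h2.
  split; [lra|]. split; [lra|].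
  rewrite hh. apply Rle_trans with L; auto. rewrite hLd. apply log2_mono; auto.
Qed.

Lemma maxnat_le (f : V -> nat) (D : R) : 0 <= D -> (forall v, INR (f v) <= D) ->
  INR (\max_(v : V) f v) <= D.
Proof.
move=> h0 hv.
apply: (big_ind (fun x => INR x <= D)) => //.
by move=> x y hx hy; rewrite /maxn; case: ifP.
Qed.

Lemma INR_double (n : nat) : INR n.*2 = 2 * INR n.
Proof. rewrite -addnn INRD; ring. Qed.

Lemma core (E : {set {set V}}) eps (oc : R) (sc bc : {set {set V}} -> R) co S Q phi p t :
  simple_graph E -> (0 < arboricity E)%nat ->
  / INR (arboricity E) <= eps < 1 ->
  oc <= co * INR #|E| -> 0 <= S ->
  (forall E', E' \subset E -> sc E' <= S * INR #|E'|) ->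
  (forall E', E' \subset E ->
     INR (arboricity E') <= 2 * (2 * INR (arboricity E) / 2 ^ (h_param eps (arboricity E)) + 1) ->
     bc E' <= Q * INR #|E'|) ->
  (exists mu, fdo_orientation E mu /\
     exists c, oec sc bc mu E (h_param eps (arboricity E)) phi p c /\ t = oc + c) ->
  (exists k, proper_edge_coloring E phi k /\
     INR k <= INR (max_deg E) + eps * INR (arboricity E)) /\
  t <= co * INR #|E| + S * INR #|E| * INR (h_param eps (arboricity E)) + Q * INR #|E|.
Proof.
move=> hsim ha [hle hlt] hoc hS hsc hbc [mu [hfdo [c [hoec ->]]]].
have hal : 0 < INR (arboricity E) by apply: lt_0_INR; apply/ltP.
have he : 0 < eps by have := Rinv_0_lt_compat _ hal; lra.
have hea : 1 <= eps * INR (arboricity E).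
  have : INR (arboricity E) * / INR (arboricity E) = 1 by field; lra.
  nra.
have [P1 [P2 P3]] := hp_facts he hlt hea.
have hor : orientation E mu by case: hfdo => s [_ [hor _]].
split.
  exists p; split; first exact: oec_proper hoec.
  have := oec_pal hoec (a := fun v => INR (indeg E mu v)) (b := fun v => INR (outdeg E mu v))
     (D := INR (max_deg E)) (pos_INR _) (fun v => Rle_refl _) (fun v => Rle_refl _).
  move=> H; have {}H := H (fun v => _).
  have : INR p <= INR (max_deg E) + 3 * 2 ^ (h_param eps (arboricity E)) - 2.
    apply: H => v; rewrite -INRD -deg_split; apply: leR.
    exact: (@leq_bigmax _ (fun v => deg E v) v).
  lra.
have hp : 0 < 2 ^ (h_param eps (arboricity E)) by apply: pow_lt; lra.
set beta := 2 * INR (arboricity E) / 2 ^ (h_param eps (arboricity E)) + 1.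
have hbd : beta = 2 * INR (arboricity E) / 2 ^ (h_param eps (arboricity E)) + 1 by [].
clearbody beta.
have hbeta : 0 <= beta.
  rewrite hbd; have : 0 <= 2 * INR (arboricity E) / 2 ^ (h_param eps (arboricity E)).
    apply: Rmult_le_pos; [lra | left; apply: Rinv_0_lt_compat; lra].
  lra.
have := oec_cost (E0 := E) (beta := beta) hS hsc _ hoec (subxx E) (B := 2 * INR (arboricity E)).
move=> H.
have : c <= S * INR #|E| * INR (h_param eps (arboricity E)) + Q * INR #|E|.
  apply: H.
  - move=> E' hsub hout; apply: hbc => //.
    have hor' : orientation E' mu by move=> e he'; apply: hor; apply: (subsetP hsub).
    have := arb_le_out hor' (d := \max_(v : V) outdeg E' mu v) (fun v => @leq_bigmax _ (fun v => outdeg E' mu v) v).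
    move/leR; rewrite INR_double => H1.
    have := maxnat_le hbeta hout; lra.
  - move=> v; have := leR (fdo_out hsim hfdo v); rewrite INR_double; done.
  - rewrite hbd; have : 2 ^ (h_param eps (arboricity E)) * (2 * INR (arboricity E) / 2 ^ (h_param eps (arboricity E)) + 1 - 1) = 2 * INR (arboricity E) by field; lra.
    lra.
lra.
Qed.


Lemma nV_ge2 E : simple_graph E -> (0 < arboricity E)%nat -> (2 <= #|V|)%nat.
Proof.
move=> hsim ha; case: (set_0Vmem E) => [E0 | [e he]].
  suff : (arboricity E <= 0)%nat by case: (arboricity E) ha.
  apply/bigmax_leqP => S hS.
  have -> : induced_edges E S = set0 by apply/setP => e; rewrite !inE E0 inE.
  rewrite cards0 /ceil_div add0n divn_small //; lia.
by rewrite -(hsim e he) max_card.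
Qed.

End G.

Local Open Scope R_scope.

Lemma fin_ineq (a S c d m Lg h Y B K : R) : 0 <= a -> 0 <= S -> 0 <= c -> 0 <= d -> 0 <= m ->
  1 <= Lg -> 0 <= h <= Lg -> 1 <= Y -> 0 <= B <= K * Y -> 0 <= K ->
  a * m + S * m * h + c * B * Lg * m <= (a + S + c * K + d) * (m * Lg * Y).
Proof.
move=> ha hS hc hd hm hL [h0 hh] hY [B0 hB] hK.
have LY : 1 <= Lg * Y by nra.
have mLY : 0 <= m * Lg * Y by nra.
have i1 : a * m <= a * (m * Lg * Y).
  apply: Rmult_le_compat_l => //; nra.
have i2 : S * m * h <= S * (m * Lg * Y).
  have hLY : h <= Lg * Y by nra.
  rewrite Rmult_assoc (Rmult_assoc m); apply: Rmult_le_compat_l => //.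
  by apply: Rmult_le_compat_l.
have i3 : c * B * Lg * m <= c * K * (m * Lg * Y).
  have : 0 <= c * Lg * m by apply: Rmult_le_pos; [apply: Rmult_le_pos|]; lra.
  nra.
have i4 : 0 <= d * (m * Lg * Y) by apply: Rmult_le_pos.
nra.
Qed.

Lemma base_bound (cd m A B L : R) : 0 <= m -> 0 <= A <= B -> 0 <= L ->
  cd * m * A * L <= Rmax cd 0 * B * L * m.
Proof.
move=> hm [hA hB] hL.
have hc : cd <= Rmax cd 0 by apply: Rmax_l.
have hc0 : 0 <= Rmax cd 0 by apply: Rmax_r.
have X : 0 <= m * A * L by apply: Rmult_le_pos => //; apply: Rmult_le_pos.
have i1 : cd * (m * A * L) <= Rmax cd 0 * (m * A * L) by apply: Rmult_le_compat_r.
have Y : 0 <= Rmax cd 0 * m * L by apply: Rmult_le_pos => //; apply: Rmult_le_pos.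
have i2 : Rmax cd 0 * m * L * A <= Rmax cd 0 * m * L * B by apply: Rmult_le_compat_l.
nra.
Qed.

Lemma main_part (V : finType) (E : {set {set V}}) (eps : R) (oc : R)
  (sc bcd bcr : {set {set V}} -> R) (co cs cd cr : R) :
  oc <= co * INR #|E| ->
  (forall E', simple_graph E' -> sc E' <= cs * INR #|E'|) ->
  (forall E', simple_graph E' ->
     bcd E' <= cd * INR #|E'| * INR (arboricity E') ^ 7 * log2 (INR #|V|)) ->
  (forall E', simple_graph E' ->
     bcr E' <= cr * INR #|E'| * INR (arboricity E') * log2 (INR #|V|)) ->
  simple_graph E -> (0 < arboricity E)%nat -> / INR (arboricity E) <= eps < 1 ->
  (forall phi p t,
     (exists mu, fdo_orientation E mu /\
        exists c, oec sc bcd mu E (h_param eps (arboricity E)) phi p c /\ t = oc + c) ->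
     (exists k, proper_edge_coloring E phi k /\
                (INR k <= INR (max_deg E) + eps * INR (arboricity E))) /\
     (t <= (Rmax co 0 + Rmax cs 0 + Rmax cd 0 * 26 ^ 7 + Rmax cr 0 * 26) *
             (INR #|E| * log2 (INR #|V|) / eps ^ 7))) /\
  (forall phi p t,
     (exists mu, fdo_orientation E mu /\
        exists c, oec sc bcr mu E (h_param eps (arboricity E)) phi p c /\ t = oc + c) ->
     (exists k, proper_edge_coloring E phi k /\
                (INR k <= INR (max_deg E) + eps * INR (arboricity E))) /\
     (t <= (Rmax co 0 + Rmax cs 0 + Rmax cd 0 * 26 ^ 7 + Rmax cr 0 * 26) *
             (INR #|E| * log2 (INR #|V|) / eps))).
Proof.
move=> Hoc Hsc Hbd Hbr hsim ha heps.
have [hle hlt] := heps.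
have hal : 0 < INR (arboricity E) by apply: lt_0_INR; apply/ltP.
have he : 0 < eps by have := Rinv_0_lt_compat _ hal; lra.
have hea : 1 <= eps * INR (arboricity E).
  have : INR (arboricity E) * / INR (arboricity E) = 1 by field; lra.
  nra.
have hy : 1 <= / eps.
  have : eps * / eps = 1 by field; lra.
  have : 0 < / eps by apply: Rinv_0_lt_compat.
  nra.
have hey : eps * / eps = 1 by field; lra.
have [P1 [P2 P3]] := hp_facts he hlt hea.
have hn2 := nV_ge2 hsim ha.
have hLg : 1 <= log2 (INR #|V|).
  have l22 : log2 2 = 1 by rewrite /log2; field; have := ln2_pos; lra.
  rewrite -l22; apply: log2_mono; first lra.
  by have := leR hn2; rewrite /=; lra.
have hhL : INR (h_param eps (arboricity E)) <= log2 (INR #|V|).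
  apply: Rle_trans P3 _; apply: log2_mono => //; apply: leR; exact: arb_le_n.
have hp : 0 < 2 ^ (h_param eps (arboricity E)) by apply: pow_lt; lra.
set beta := 2 * INR (arboricity E) / 2 ^ (h_param eps (arboricity E)) + 1.
have hbd : beta = 2 * INR (arboricity E) / 2 ^ (h_param eps (arboricity E)) + 1 by [].
clearbody beta.
have hz0 : 0 <= INR (arboricity E) / 2 ^ (h_param eps (arboricity E)).
  apply: Rmult_le_pos; [lra | left; apply: Rinv_0_lt_compat; lra].
have hz : INR (arboricity E) / 2 ^ (h_param eps (arboricity E)) < 6 * / eps.
  have h1 : INR (arboricity E) < 6 * 2 ^ (h_param eps (arboricity E)) * / eps.
    have := Rmult_lt_compat_r (/ eps) _ _ (Rinv_0_lt_compat _ he) P2.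
    have -> : eps * INR (arboricity E) * / eps = INR (arboricity E) by field; lra.
    done.
  have := Rmult_lt_compat_r (/ 2 ^ (h_param eps (arboricity E))) _ _ (Rinv_0_lt_compat _ hp) h1.
  have -> : 6 * 2 ^ h_param eps (arboricity E) * / eps * / 2 ^ h_param eps (arboricity E) = 6 * / eps by field; lra.
  done.
have hb0 : 0 <= 2 * beta by rewrite hbd; lra.
have hb26 : 2 * beta <= 26 * / eps by rewrite hbd; lra.
have hsimsub : forall E' : {set {set V}}, E' \subset E -> simple_graph E'.
  by move=> E' hsub e he'; apply: hsim; apply: (subsetP hsub).
have hsc' : forall E' : {set {set V}}, E' \subset E -> sc E' <= Rmax cs 0 * INR #|E'|.
  move=> E' hsub; apply: Rle_trans (Hsc E' (hsimsub E' hsub)) _.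
  apply: Rmult_le_compat_r; [exact: pos_INR | exact: Rmax_l].
have hoc' : oc <= Rmax co 0 * INR #|E|.
  apply: Rle_trans Hoc _; apply: Rmult_le_compat_r; [exact: pos_INR | exact: Rmax_l].
have hLg0 : 0 <= log2 (INR #|V|) by lra.
have hm0 := pos_INR #|E|.
have hh0 := pos_INR (h_param eps (arboricity E)).
split.
  have Hb : forall E' : {set {set V}}, E' \subset E -> INR (arboricity E') <= 2 * (2 * INR (arboricity E) / 2 ^ (h_param eps (arboricity E)) + 1) -> bcd E' <= Rmax cd 0 * (2 * beta) ^ 7 * log2 (INR #|V|) * INR #|E'|.
    move=> E' hsub harb; rewrite -hbd in harb.
    apply: Rle_trans (Hbd E' (hsimsub E' hsub)) _.
    apply: base_bound; [exact: pos_INR | split; [apply: pow_le; exact: pos_INR | apply: pow_incr; split => //; exact: pos_INR] | done].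
  move=> phi p t run.
  have [col tb] := core hsim ha heps hoc' (Rmax_r cs 0) hsc' Hb run.
  split => //.
  apply: Rle_trans tb _.
  rewrite /Rdiv -pow_inv.
  apply: fin_ineq; try apply: Rmax_r.
  - apply: Rmult_le_pos; [apply: Rmax_r | lra].
  - done.
  - done.
  - by split.
  - by apply: pow_R1_Rle.
  - split; first by apply: pow_le.
    rewrite -Rpow_mult_distr; apply: pow_incr; lra.
  - by apply: pow_le; lra.
have Hb : forall E' : {set {set V}}, E' \subset E -> INR (arboricity E') <= 2 * (2 * INR (arboricity E) / 2 ^ (h_param eps (arboricity E)) + 1) -> bcr E' <= Rmax cr 0 * (2 * beta) * log2 (INR #|V|) * INR #|E'|.
  move=> E' hsub harb; rewrite -hbd in harb.
  apply: Rle_trans (Hbr E' (hsimsub E' hsub)) _.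
  apply: base_bound; [exact: pos_INR | split; [exact: pos_INR | done] | done].
move=> phi p t run.
have [col tb] := core hsim ha heps hoc' (Rmax_r cs 0) hsc' Hb run.
split => //.
apply: Rle_trans tb _.
have -> : Rmax co 0 + Rmax cs 0 + Rmax cd 0 * 26 ^ 7 + Rmax cr 0 * 26 =
          Rmax co 0 + Rmax cs 0 + Rmax cr 0 * 26 + Rmax cd 0 * 26 ^ 7 by ring.
rewrite /Rdiv.
apply: fin_ineq; try apply: Rmax_r.
- apply: Rmult_le_pos; [apply: Rmax_r | apply: pow_le; lra].
- done.
- done.
- by split.
- done.
- by split.
- lra.
Qed.

Local Close Scope R_scope.

Theorem theorem4p16 :
  forall (oc sc bcd bcr : forall V : finType, {set {set V}} -> R) (co cs cd cr : R),
  (* Forests-Decomposition Orientation runs in O(m) time *)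
  (forall (V : finType) (E : {set {set V}}), simple_graph E ->
     (oc V E <= co * INR #|E|)%R) ->
  (* degree-splitting (and recombination) runs in O(|E|) time *)
  (forall (V : finType) (E : {set {set V}}), simple_graph E ->
     (sc V E <= cs * INR #|E|)%R) ->
  (* deterministic base case: O(m' alpha'^7 log n') time *)
  (forall (V : finType) (E : {set {set V}}), simple_graph E ->
     (bcd V E <= cd * INR #|E| * INR (arboricity E) ^ 7 * log2 (INR #|V|))%R) ->
  (* randomized base case: O(m' alpha' log n') expected time *)
  (forall (V : finType) (E : {set {set V}}), simple_graph E ->
     (bcr V E <= cr * INR #|E| * INR (arboricity E) * log2 (INR #|V|))%R) ->
  exists C : R,
  forall (V : finType) (E : {set {set V}}) (eps : R),
    simple_graph E ->
    (0 < arboricity E)%N ->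
    (/ INR (arboricity E) <= eps < 1)%R ->
    (forall phi p t,
       aec_run oc sc bcd E (h_param eps (arboricity E)) phi p t ->
       (exists k, proper_edge_coloring E phi k /\
                  (INR k <= INR (max_deg E) + eps * INR (arboricity E))%R) /\
       (t <= C * (INR #|E| * log2 (INR #|V|) / eps ^ 7))%R) /\
    (forall phi p t,
       aec_run oc sc bcr E (h_param eps (arboricity E)) phi p t ->
       (exists k, proper_edge_coloring E phi k /\
                  (INR k <= INR (max_deg E) + eps * INR (arboricity E))%R) /\
       (t <= C * (INR #|E| * log2 (INR #|V|) / eps))%R).
Proof.
move=> oc sc bcd bcr co cs cd cr Hoc Hsc Hbd Hbr.
exists (Rmax co 0 + Rmax cs 0 + Rmax cd 0 * 26 ^ 7 + Rmax cr 0 * 26)%R.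
move=> V E eps hsim ha heps.
exact: (main_part (Hoc V E hsim) (Hsc V) (Hbd V) (Hbr V) hsim ha heps).
Qed.
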